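(* There exist class $\mathcal{K}_\infty$ functions $\alpha_1,\alpha_2$ such that: $V(x)\ge\alpha_1(|x|)$ for all $x\in\mathbb{X}$; $V(x)\le\alpha_2(|x|)$ for all $x\in\mathbb{X}_f$; $V(f(x,\kappa(x)))\le V(x)-\alpha_1(|x|)$ for all $x\in\mathbb{X}$.
   Context: Consider the discrete-time controlled system $x^+=f(x,u)$ with state $x\in\mathbb{R}^{n}$ and control $u\in\mathbb{R}^{m}$, constraint sets $\mathbb{X}\subset\mathbb{R}^n$, $\mathbb{U}\subset\mathbb{R}^m$, $\mathbb{Y}\subset\mathbb{R}^p$, and a constraint function $h(x,u)\in\mathbb{R}^p$. A control $u$ is feasible at $x\in\mathbb{X}$ if $u\in\mathbb{U}$, $f(x,u)\in\mathbb{X}$ and $h(x,u)\in\mathbb{Y}$. A control sequence $(u(0),\ldots,u(N-1))$ is feasible from $x$ if, for the state sequence defined by $x(0)=x$ and $x(k+1)=f(x(k),u(k))$, each $u(k)$ is feasible at $x(k)$. We are given a stage cost $l(x,u)$, a terminal set $\mathbb{X}_f$ and a terminal cost $V_f$ defined on $\mathbb{X}_f$. Horizon-$N$ problem at $x$: minimize $\sum_{k=0}^{N-1}l(x(k),u(k))+V_f(x(N))$ over control sequences that are feasible from $x$ and satisfy $x(N)\in\mathbb{X}_f$. Let $V_N^0(x)$ be its minimum value, which is assumed to be attained whenever the feasible set is nonempty. Let $(u^0_N(0),\ldots,u^0_N(N-1))$ be a minimizer, and set $\kappa_N(x)=u_N^0(0)$. For $N=0$, $V_0^0(x)=V_f(x)$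 for $x\in\mathbb{X}_f$. Standing assumptions: (A1) $f,l,h,V_f$ are continuous on an open set containing $\mathbb{X}\times\mathbb{U}$ (for $V_f$, an open set containing $\mathbb{X}_f$). The stage cost $l$ is nonnegative definite in $(x,u)$ and positive definite in $u$. $V_f$ is positive definite on $\mathbb{X}_f$. Moreover $f(0,0)=0$, $l(0,0)=0$ and $V_f(0)=0$. (A2) $\mathbb{X}$ and $\mathbb{X}_f$ are closed, $\mathbb{X}_f\subset\mathbb{X}$, $\mathbb{U}$ is compact, and $\mathbb{X},\mathbb{X}_f,\mathbb{U}$ each contain a neighborhood of the origin. (A3) For every $x\in\mathbb{X}_f$ there is a control $u$ feasible at $x$ with $f(x,u)\in\mathbb{X}_f$ and $l(x,u)+V_f(f(x,u))\le V_f(x)$. (A4) For every $x\in\mathbb{X}$ there exist an integer $N\ge0$ and a feasible control sequence of length $N$ from $x$ whose state sequence satisfies $x(N)\in\mathbb{X}_f$. For $x\in\mathbb{X}$, $N(x)$ denotes the minimum such $N$. (A5) There is an integer $M\ge 0$ with $N(x)\le M$ for all $x\in\mathbb{X}$. (A6) There are class $\mathcal{K}_\infty$ functions $\alpha_1,\alpha_2$ with $l(x,u)\ge\alpha_1(|x|)$ for all $x\in\mathbb{X}$, $u\in\mathbb{U}$, and $V_f(x)\le\alpha_2(|x|)$ for all $x\in\mathbb{X}_f$. Define $V(x)=V^0_{N(x)}(x)$ for $x\in\mathbb{X}$. For $N(x)\ge1$ set $\kappa(x)=\kappa_{N(x)}(x)$. For $N(x)=0$ (equivalently $x\in\mathbb{X}_f$),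 let $\kappa(x)$ be a feasible control $u$ as in (A3). *)

(* Defs.v *)
From HB Require Import structures.
From mathcomp Require Import all_boot all_order all_algebra.
From mathcomp Require Import all_classical all_reals all_analysis.
Set Implicit Arguments. Unset Strict Implicit. Unset Printing Implicit Defensive.
Import Order.TTheory GRing.Theory Num.Theory.
Import numFieldNormedType.Exports.
Local Open Scope classical_set_scope.
Local Open Scope ring_scope.

Definition enorm {R : realType} {n : nat} (x : 'rV[R]_n) : R :=
  Num.sqrt (\sum_(i < n) x ord0 i ^+ 2).

Definition classKinf {R : realType} (a : R -> R) : Prop :=
  [/\ a 0 = 0,
      {within [set r : R | 0 <= r], continuous a},
      {in [set r : R | 0 <= r] &, {homo a : r s / r < s}}
    & a r @[r --> +oo] --> +oo].

Fixpoint traj {X U : Type} (f : X -> U -> X) (x : X) (u : nat -> U) (k : nat)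
  : X :=
  match k with
  | 0 => x
  | k'.+1 => f (traj f x u k') (u k')
  end.

Section MPC.
Context {R : realType} {n m p : nat}.
Local Notation st := 'rV[R]_n.
Local Notation ct := 'rV[R]_m.
Local Notation ot := 'rV[R]_p.

Definition feas_at (f : st -> ct -> st) (h : st -> ct -> ot)
  (Xs : set st) (Us : set ct) (Ys : set ot) (x : st) (u : ct) : Prop :=
  [/\ Us u, Xs (f x u) & Ys (h x u)].

(* Control sequence (u(0),...,u(N-1)) (entries past N-1 are irrelevant)
   is feasible from x. *)
Definition feas_seq f h Xs Us Ys (N : nat) (x : st) (u : nat -> ct) : Prop :=
  forall k, (k < N)%N -> feas_at f h Xs Us Ys (traj f x u k) (u k).

Definition admissible f h Xs Us Ys (Xf : set st) (N : nat) (x : st)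
  (u : nat -> ct) : Prop :=
  feas_seq f h Xs Us Ys N x u /\ Xf (traj f x u N).

Definition costN (f : st -> ct -> st) (l : st -> ct -> R) (Vf : st -> R)
  (N : nat) (x : st) (u : nat -> ct) : R :=
  \sum_(k < N) l (traj f x u k) (u k) + Vf (traj f x u N).

(* Optimal value V_N^0(x) (infimum of the cost over admissible sequences;
   it is a minimum under the attainment hypothesis). *)
Definition VN0 f h l Vf Xs Us Ys Xf (N : nat) (x : st) : R :=
  inf [set costN f l Vf N x u | u in admissible f h Xs Us Ys Xf N x].

Definition is_minimizer f h l Vf Xs Us Ys Xf (N : nat) (x : st)
  (u : nat -> ct) : Prop :=
  admissible f h Xs Us Ys Xf N x u /\
  forall u', admissible f h Xs Us Ys Xf N x u' ->
    costN f l Vf N x u <= costN f l Vf N x u'.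

End MPC.

(* Least natural number satisfying P (0 if none exists). *)
Lemma ex_asbool_nat (P : nat -> Prop) :
  (exists k, P k) -> exists k, `[< P k >].
Proof. by case=> k Pk; exists k; apply/asboolP. Qed.

Definition least_nat (P : nat -> Prop) : nat :=
  match pselect (exists k, P k) with
  | left H => ex_minn (ex_asbool_nat H)
  | right _ => 0%N
  end.

Section MPC2.
Context {R : realType} {n m p : nat}.
Local Notation st := 'rV[R]_n.
Local Notation ct := 'rV[R]_m.
Local Notation ot := 'rV[R]_p.

Definition Nmin (f : st -> ct -> st) (h : st -> ct -> ot) Xs Us Ys
  (Xf : set st) (x : st) : nat :=
  least_nat (fun N => exists u, admissible f h Xs Us Ys Xf N x u).

Definition Vmpc f h l Vf Xs Us Ys Xf (x : st) : R :=
  VN0 f h l Vf Xs Us Ys Xf (Nmin f h Xs Us Ys Xf x) x.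

End MPC2.

(* Main.v *)
Require Import Defs.
From HB Require Import structures.
From mathcomp Require Import all_boot all_order all_algebra.
From mathcomp Require Import all_classical all_reals all_analysis.
Import Order.TTheory GRing.Theory Num.Theory.
Import numFieldNormedType.Exports.
Local Open Scope classical_set_scope.
Local Open Scope ring_scope.


Lemma inf_min (R : realType) (S : set R) (a : R) :
  S a -> (forall b, S b -> a <= b) -> inf S = a.
Proof.
move=> Sa lb; apply/eqP; rewrite eq_le; apply/andP; split.
  by apply: (ge_inf (E := S)) => //; exists a => b /lb.
by apply: lb_le_inf; [exists a | move=> b /lb].
Qed.

Lemma least_natP (P : nat -> Prop) : (exists k, P k) ->
  P (least_nat P) /\ forall k, P k -> (least_nat P <= k)%N.
Proof.
move=> ex; rewrite /least_nat; case: pselect => [H|//].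
case: ex_minnP => k /asboolP Pk minP; split => // j Pj; apply: minP.
exact/asboolP.
Qed.

Lemma traj_shift X U (f : X -> U -> X) x u k :
  traj f (f x (u 0%N)) (fun j => u j.+1) k = traj f x u k.+1.
Proof. by elim: k => //= k ->. Qed.

Definition pre {U : Type} (a : U) (w : nat -> U) : nat -> U :=
  fun j => if j is j'.+1 then w j' else a.

Set Implicit Arguments.
Section H.
Context {R : realType} {n m p : nat}
  (f : 'rV[R]_n -> 'rV[R]_m -> 'rV[R]_n)
  (h : 'rV[R]_n -> 'rV[R]_m -> 'rV[R]_p)
  (l : 'rV[R]_n -> 'rV[R]_m -> R) (Vf : 'rV[R]_n -> R)
  (Xs : set 'rV[R]_n) (Us : set 'rV[R]_m) (Ys : set 'rV[R]_p)
  (Xf : set 'rV[R]_n).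

Lemma adm_shift N x u : admissible f h Xs Us Ys Xf N.+1 x u ->
  feas_at f h Xs Us Ys x (u 0%N) /\
  admissible f h Xs Us Ys Xf N (f x (u 0%N)) (fun j => u j.+1).
Proof.
case=> fs XfN; split; first exact: (fs 0%N).
split; last by rewrite traj_shift.
by move=> k kN; rewrite traj_shift; exact: fs.
Qed.

Lemma adm_cons N x a w : feas_at f h Xs Us Ys x a ->
  admissible f h Xs Us Ys Xf N (f x a) w ->
  admissible f h Xs Us Ys Xf N.+1 x (pre a w).
Proof.
move=> fa [fs XfN]; split; last by rewrite -(traj_shift _ _ f x (pre a w)).
case=> [_|k kN] //; rewrite -(traj_shift _ _ f x (pre a w)); exact: fs.
Qed.

Lemma cost_shift N x u : costN f l Vf N.+1 x u =
  l x (u 0%N) + costN f l Vf N (f x (u 0%N)) (fun j => u j.+1).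
Proof.
rewrite /costN big_ord_recl /= traj_shift -addrA; congr (_ + (_ + _)).
by apply: eq_bigr => i _; rewrite /= traj_shift.
Qed.

Lemma cost_ge0 : (forall x u, Xs x -> Us u -> 0 <= l x u) ->
  (forall x, Xf x -> 0 <= Vf x) -> forall N x u, Xs x ->
  admissible f h Xs Us Ys Xf N x u -> 0 <= costN f l Vf N x u.
Proof.
move=> lnn Vnn; elim=> [|N IH] x u Xx.
  by rewrite /costN big_ord0 add0r => -[_ /= Xfx]; exact: Vnn.
rewrite cost_shift => /adm_shift [[Uu Xx' _] ad].
by apply: addr_ge0; [exact: lnn | exact: IH].
Qed.

Lemma VN0_min N x u : is_minimizer f h l Vf Xs Us Ys Xf N x u ->
  VN0 f h l Vf Xs Us Ys Xf N x = costN f l Vf N x u.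
Proof.
case=> ad mn; apply: inf_min; first by exists u.
by move=> b [u' ad' <-]; exact: mn.
Qed.

Lemma VN0_Xf x : Xf x -> VN0 f h l Vf Xs Us Ys Xf 0 x = Vf x.
Proof.
move=> Xfx; apply: inf_min.
  exists (fun _ => 0) => //; last by rewrite /costN big_ord0 add0r.
by move=> b [u' ad' <-]; rewrite /costN big_ord0 add0r.
Qed.

End H.
Unset Implicit Arguments.

Theorem proposition1 (R : realType) (n m p : nat)
  (f : 'rV[R]_n -> 'rV[R]_m -> 'rV[R]_n)
  (h : 'rV[R]_n -> 'rV[R]_m -> 'rV[R]_p)
  (l : 'rV[R]_n -> 'rV[R]_m -> R) (Vf : 'rV[R]_n -> R)
  (Xs : set 'rV[R]_n) (Us : set 'rV[R]_m) (Ys : set 'rV[R]_p)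
  (Xf : set 'rV[R]_n) (kappa : 'rV[R]_n -> 'rV[R]_m)
  (* (A1) *)
  (A1_cont : exists O : set ('rV[R]_n * 'rV[R]_m), [/\ open O, Xs `*` Us `<=` O &
      forall z, O z ->
        [/\ {for z, continuous (fun w => f w.1 w.2)},
            {for z, continuous (fun w => l w.1 w.2)} &
            {for z, continuous (fun w => h w.1 w.2)}]])
  (A1_contVf : exists O : set 'rV[R]_n, [/\ open O, Xf `<=` O &
      forall z, O z -> {for z, continuous Vf}])
  (A1_lnn : forall x u, Xs x -> Us u -> 0 <= l x u)
  (A1_lpd : forall x u, Xs x -> Us u -> u != 0 -> 0 < l x u)
  (A1_Vfpd : forall x, Xf x -> x != 0 -> 0 < Vf x)
  (A1_f0 : f 0 0 = 0) (A1_l0 : l 0 0 = 0) (A1_Vf0 : Vf 0 = 0)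
  (* (A2) *)
  (A2_Xcl : closed Xs) (A2_Xfcl : closed Xf) (A2_XfX : Xf `<=` Xs)
  (A2_Ucpt : compact Us)
  (A2_Xnbhs : nbhs (0 : 'rV[R]_n) Xs) (A2_Xfnbhs : nbhs (0 : 'rV[R]_n) Xf)
  (A2_Unbhs : nbhs (0 : 'rV[R]_m) Us)
  (* (A3) *)
  (A3 : forall x, Xf x -> exists u, [/\ feas_at f h Xs Us Ys x u, Xf (f x u) &
      l x u + Vf (f x u) <= Vf x])
  (* (A4) *)
  (A4 : forall x, Xs x -> exists N u, admissible f h Xs Us Ys Xf N x u)
  (* (A5) *)
  (A5 : exists M : nat, forall x, Xs x -> (Nmin f h Xs Us Ys Xf x <= M)%N)
  (* (A6) *)
  (A6 : exists a1 a2 : R -> R, [/\ classKinf a1, classKinf a2,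
      (forall x u, Xs x -> Us u -> a1 (enorm x) <= l x u) &
      (forall x, Xf x -> Vf x <= a2 (enorm x))])
  (* the minimum of each horizon-N problem is attained when feasible *)
  (attained : forall (N : nat) x, (exists u, admissible f h Xs Us Ys Xf N x u) ->
      exists u, is_minimizer f h l Vf Xs Us Ys Xf N x u)
  (* definition of kappa *)
  (kappa_pos : forall x, Xs x -> (0 < Nmin f h Xs Us Ys Xf x)%N ->
      exists u, is_minimizer f h l Vf Xs Us Ys Xf (Nmin f h Xs Us Ys Xf x) x u
                /\ u 0%N = kappa x)
  (kappa_0 : forall x, Xs x -> Nmin f h Xs Us Ys Xf x = 0%N ->
      [/\ feas_at f h Xs Us Ys x (kappa x), Xf (f x (kappa x)) &
          l x (kappa x) + Vf (f x (kappa x)) <= Vf x]) :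
  exists a1 a2 : R -> R, [/\ classKinf a1, classKinf a2,
    (forall x, Xs x -> a1 (enorm x) <= Vmpc f h l Vf Xs Us Ys Xf x),
    (forall x, Xf x -> Vmpc f h l Vf Xs Us Ys Xf x <= a2 (enorm x)) &
    (forall x, Xs x -> Vmpc f h l Vf Xs Us Ys Xf (f x (kappa x))
                   <= Vmpc f h l Vf Xs Us Ys Xf x - a1 (enorm x))].
Proof.
case: A6 => a1 [a2 [Ha1 Ha2 Hl HVf]].
have Vnn : forall x, Xf x -> 0 <= Vf x.
  move=> x Xfx; case: (eqVneq x 0) => [->|nz]; first by rewrite A1_Vf0.
  exact/ltW/A1_Vfpd.
have Nxf : forall x, Xf x -> Nmin f h Xs Us Ys Xf x = 0%N.
  move=> x Xfx.
  have ad0 : admissible f h Xs Us Ys Xf 0 x (fun _ => 0) by [].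
  have [_ H] := least_natP _ (ex_intro (fun N => exists u,
    admissible f h Xs Us Ys Xf N x u) 0%N (ex_intro _ _ ad0)).
  by apply/eqP; rewrite -leqn0; apply: H; exists (fun _ => 0).
have Vxf : forall x, Xf x -> Vmpc f h l Vf Xs Us Ys Xf x = Vf x.
  by move=> x Xfx; rewrite /Vmpc Nxf // VN0_Xf.
have NP : forall x, Xs x -> (exists u, admissible f h Xs Us Ys Xf
    (Nmin f h Xs Us Ys Xf x) x u) /\ forall k, (exists u, admissible f h Xs Us Ys Xf
    k x u) -> (Nmin f h Xs Us Ys Xf x <= k)%N.
  move=> x Xx; apply: least_natP; case: (A4 x Xx) => N [u ad]; by exists N, u.
exists a1, a2; split => //.
- move=> x Xx; have [[u ad] _] := NP x Xx.
  have [v mv] := attained _ _ (ex_intro _ u ad).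
  rewrite /Vmpc (VN0_min mv).
  move: mv => [adv _].
  case E : (Nmin f h Xs Us Ys Xf x) adv => [|N] adv.
    move: adv => [_ /= Xfx].
    rewrite /costN big_ord0 add0r /=.
    have [[Uk _ _] Xfk le] := kappa_0 x Xx E.
    apply: le_trans (Hl _ _ Xx Uk) _; apply: le_trans le.
    by rewrite lerDl; exact: Vnn.
  rewrite cost_shift; have [[Uu Xx' _] ad'] := adm_shift adv.
  apply: le_trans (Hl _ _ Xx Uu) _; rewrite lerDl.
  exact: (@cost_ge0 _ _ _ _ f h l Vf Xs Us Ys Xf A1_lnn Vnn _ _ _ Xx' ad').
- by move=> x Xfx; rewrite Vxf //; exact: HVf.
- move=> x Xx; have [[u ad] Nmn] := NP x Xx.
  case E : (Nmin f h Xs Us Ys Xf x) => [|N].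
    move: ad; rewrite E => -[_ /= Xfx].
    have [[Uk _ _] Xfk le] := kappa_0 x Xx E.
    rewrite !Vxf // lerBrDr; apply: le_trans le.
    by rewrite addrC lerD2r; exact: Hl.
  have Npos : (0 < Nmin f h Xs Us Ys Xf x)%N by rewrite E.
  have [v [mv v0]] := kappa_pos x Xx Npos.
  rewrite {2}/Vmpc (VN0_min mv) E.
  move: (mv) => [adv _]; rewrite E in adv.
  have [fa ad'] := adm_shift adv; rewrite v0 in fa ad'.
  have ex' : exists k, exists w, admissible f h Xs Us Ys Xf k (f x (kappa x)) w.
    by exists N, (fun j => v j.+1).
  have [[w adw] minw] := least_natP _ ex'.
  have EN : Nmin f h Xs Us Ys Xf (f x (kappa x)) = N.
    apply/eqP; rewrite eqn_leq; apply/andP; split.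
      by apply: minw; exists (fun j => v j.+1).
    rewrite -ltnS -E; apply: Nmn; eexists; exact: adm_cons fa adw.
  rewrite /Vmpc EN.
  have [z mz] := attained _ _ (ex_intro _ _ ad').
  rewrite (VN0_min mz); move: mz => [_ mz].
  apply: le_trans (mz _ ad') _.
  rewrite cost_shift v0 lerBrDr [X in X <= _]addrC lerD2r.
  by case: fa => Uk _ _; exact: Hl.
Qed.
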